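(* For every problem size $(n,m)$, the sets $\chi\mathrm{MF}$ and $\chi\mathrm{SP}\cup\chi\mathrm{MF}$ are closed subsets of $\mathrm{JSP}(n,m)$, and $\chi\mathrm{MF}\subset\overline{\chi\mathrm{SP}}$; consequently $\overline{\chi\mathrm{SP}}=\chi\mathrm{SP}\cup\chi\mathrm{MF}$.
   Context: Jet space: $\mathrm{JSP}(n,m)=\mathbb R^{nm_\le+m_\le+nm_=+m_=+n}$ with elements $\sigma=((a_i,\alpha_i)_{i=1..m_\le},(b_j,\beta_j)_{j=1..m_=},a_{m_\le^*})$, $a_i,b_j,a_{m_\le^*}\in\mathbb R^n$, $\alpha_i,\beta_j\in\mathbb R$, $m_\le^*:=m_\le+1$. Let $I_0(\sigma)=\{i\le m_\le:\alpha_i=0\}$, $I_0^*=I_0\cup\{m_\le^*\}$, and $C(\sigma)$ the set of $(\mu,\lambda)\in[0,\infty)^{m_\le^*}\times\mathbb R^{m_=}$ such that $\alpha_i\le0$ for all $i$, $\mu_i=0$ for $i\notin I_0^*$, and $\sum_i\mu_ia_i+\sum_j\lambda_jb_j=0$ (so $C(\sigma)=\emptyset$ if some $\alpha_i>0$). $\mathcal I(\sigma)$ is the set of pairs $(I,J)$, $I\subset I_0^*$, $J\subset\{1..m_=\}$, with $I\dot\cup J\ne\emptyset$, admitting $(\mu,\lambda)\in C(\sigma)$ with $\mu_i>0$ ($i\in I$), $\lambda_j\ne0$ ($j\in J$), and inclusion-minimal (for $I\dot\cup J$) among such pairs. $\mathcal I^{SP}(\sigma)=\{(I,J)\in\mathcal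 I(\sigma): m_\le^*\in I\}$, $\mathcal I^{MF}=\mathcal I\setminus\mathcal I^{SP}$. $\chi\mathrm{SP}=\{\sigma:\mathcal I^{SP}(\sigma)\ne\emptyset\}$, $\chi\mathrm{MF}=\{\sigma:\mathcal I^{MF}(\sigma)\ne\emptyset\}$. *)

(* Defs.v *)
From Stdlib Require Import Reals.
From mathcomp Require Import all_boot.
Set Implicit Arguments. Unset Strict Implicit. Unset Printing Implicit Defensive.

Local Open Scope R_scope.

(* An element sigma of JSP(n,m), m = (mle, meq):
   ((a_i, alpha_i)_{i < mle}, (b_j, beta_j)_{j < meq}, a_{mle^*}). *)
Record jet (n mle meq : nat) := Jet {
  ja : 'I_mle -> 'I_n -> R;
  jalpha : 'I_mle -> R;
  jb : 'I_meq -> 'I_n -> R;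
  jbeta : 'I_meq -> R;
  jastar : 'I_n -> R }.

Section Defs.
Variables n mle meq : nat.
Implicit Types (sigma tau : jet n mle meq).

(* Standard (sup-norm) topology on JSP(n,m) = R^(n mle + mle + n meq + meq + n). *)
Definition jet_close sigma tau (eps : R) : Prop :=
  (forall i k, Rabs (ja sigma i k - ja tau i k) < eps) /\
  (forall i, Rabs (jalpha sigma i - jalpha tau i) < eps) /\
  (forall j k, Rabs (jb sigma j k - jb tau j k) < eps) /\
  (forall j, Rabs (jbeta sigma j - jbeta tau j) < eps) /\
  (forall k, Rabs (jastar sigma k - jastar tau k) < eps).

Definition jclosure (S : jet n mle meq -> Prop) (sigma : jet n mle meq) : Prop :=
  forall eps, 0 < eps -> exists tau, S tau /\ jet_close sigma tau eps.

Definition jclosed (S : jet n mle meq -> Prop) : Prop :=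
  forall sigma, jclosure S sigma -> S sigma.

(* indices 1..mle^* are 'I_mle.+1, with mle^* = ord_max *)
Definition aext sigma (i : 'I_mle.+1) : 'I_n -> R :=
  match unlift ord_max i with Some j => ja sigma j | None => jastar sigma end.

Definition in_I0star sigma (i : 'I_mle.+1) : Prop :=
  match unlift ord_max i with Some j => jalpha sigma j = 0 | None => True end.

Definition inC sigma (mu : 'I_mle.+1 -> R) (lam : 'I_meq -> R) : Prop :=
  (forall i, jalpha sigma i <= 0) /\
  (forall i, 0 <= mu i) /\
  (forall i, ~ in_I0star sigma i -> mu i = 0) /\
  (forall k : 'I_n,
     \big[Rplus/0]_(i < mle.+1) (mu i * aext sigma i k)
     + \big[Rplus/0]_(j < meq) (lam j * jb sigma j k) = 0).

Definition admits sigma (I : {set 'I_mle.+1}) (J : {set 'I_meq}) : Prop :=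
  (forall i, i \in I -> in_I0star sigma i) /\
  (I != set0 \/ J != set0) /\
  exists mu lam, inC sigma mu lam /\
    (forall i, (i \in I -> 0 < mu i) /\ (i \notin I -> mu i = 0)) /\
    (forall j, (j \in J -> lam j <> 0) /\ (j \notin J -> lam j = 0)).

Definition inIcal sigma I J : Prop :=
  admits sigma I J /\
  forall (I' : {set 'I_mle.+1}) (J' : {set 'I_meq}), I' \subset I -> J' \subset J -> admits sigma I' J' ->
    I' = I /\ J' = J.

Definition chiSP sigma : Prop :=
  exists I J, inIcal sigma I J /\ ord_max \in I.

Definition chiMF sigma : Prop :=
  exists I J, inIcal sigma I J /\ ord_max \notin I.

End Defs.

(* Main.v *)
From HB Require Import structures.
Require Import Defs.
From Stdlib Require Import Reals Lra Classical.
From mathcomp Require Import all_boot.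
Set Implicit Arguments. Unset Strict Implicit. Unset Printing Implicit Defensive.
Local Open Scope R_scope.
HB.instance Definition _ := Monoid.isComLaw.Build R R0 Rplus (fun x y z => esym (Rplus_assoc x y z)) Rplus_comm Rplus_0_l.

Lemma sumR_add (I : finType) (F G : I -> R) :
  \big[Rplus/0]_(i : I) (F i + G i) = \big[Rplus/0]_(i : I) F i + \big[Rplus/0]_(i : I) G i.
Proof. by rewrite big_split. Qed.

Lemma sumR_scal (I : finType) (r : R) (F : I -> R) :
  \big[Rplus/0]_(i : I) (r * F i) = r * \big[Rplus/0]_(i : I) F i.
Proof.
elim/big_rec2: _ => [|i y1 y2 _ ->]; first by rewrite Rmult_0_r.
by rewrite Rmult_plus_distr_l.
Qed.

Lemma sumR_ge0 (I : finType) (F : I -> R) :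
  (forall i, 0 <= F i) -> 0 <= \big[Rplus/0]_(i : I) F i.
Proof.
move=> H; elim/big_rec: _ => [|i y _ Hy]; first lra.
by have := H i; lra.
Qed.

Lemma sumR_term (I : finType) (F : I -> R) j :
  (forall i, 0 <= F i) -> F j <= \big[Rplus/0]_(i : I) F i.
Proof.
move=> H; rewrite (bigD1 j) //=.
have : 0 <= \big[Rplus/0]_(i | i != j) F i.
  by elim/big_rec: _ => [|i y _ Hy]; [lra| have := H i; lra].
lra.
Qed.

Lemma sumR_delta (I : finType) (j : I) (x : R) :
  \big[Rplus/0]_(i : I) (if i == j then x else 0) = x.
Proof.
rewrite (bigD1 j) //= eqxx big1; first by rewrite Rplus_0_r.
by move=> i; case: eqP.
Qed.

Lemma sumR_abs_le (I : finType) (F : I -> R) (t : R) :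
  (forall i, Rabs (F i) <= t) ->
  Rabs (\big[Rplus/0]_(i : I) F i) <= t * \big[Rplus/0]_(i : I) 1.
Proof.
move=> H; rewrite -sumR_scal.
elim/big_rec2: _ => [|i y1 y2 _ Hy]; first by rewrite Rabs_R0; lra.
have := Rabs_triang (F i) y2; have := H i; lra.
Qed.

Lemma small_eq0 (x : R) : (forall d, 0 < d -> Rabs x < d) -> x = 0.
Proof.
move=> H; apply: NNPP => Hx.
have Hp : 0 < Rabs x by apply: Rabs_pos_lt.
have := H _ Hp; lra.
Qed.

Lemma min_ex (P : nat -> Prop) : (exists n, P n) -> exists n, P n /\ forall m, P m -> (n <= m)%N.
Proof.
move=> [n Pn].
elim: n {-2}n (leqnn n) Pn => [|k IH] m Hm Pm.
  exists m; split => // p _; move: Hm; rewrite leqn0 => /eqP ->; done.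
case: (classic (exists p, P p /\ (p < m)%N)) => [[p [Pp Hp]]|H].
  by apply: (IH p) => //; rewrite -ltnS; apply: leq_trans Hp Hm.
exists m; split => // p Pp; case: (leqP m p) => // Hpm.
by exfalso; apply: H; exists p.
Qed.

Lemma argmin_seq (T : eqType) (s : seq T) (P : T -> Prop) (f : T -> R) :
  (exists x, x \in s /\ P x) ->
  exists x, x \in s /\ P x /\ forall y, y \in s -> P y -> f x <= f y.
Proof.
elim: s => [|a s IH] [x [Hx Px]]; first by rewrite in_nil in Hx.
case: (classic (exists y, y \in s /\ P y)) => [Hs|Hs].
  have [z [zs [Pz Hz]]] := IH Hs.
  case: (classic (P a)) => Pa.
    case: (Rle_dec (f a) (f z)) => Haz.
      exists a; split; first by rewrite mem_head.
      split => // y; rewrite in_cons => /orP[/eqP -> _|ys Py]; first lra.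
      by have := Hz y ys Py; lra.
    exists z; split; first by rewrite in_cons zs orbT.
    split => // y; rewrite in_cons => /orP[/eqP -> _|ys Py]; first lra.
    by apply: Hz.
  exists z; split; first by rewrite in_cons zs orbT.
  split => // y; rewrite in_cons => /orP[/eqP -> //|ys Py]; by apply: Hz.
have Pa : P a.
  move: Hx; rewrite in_cons => /orP[/eqP <- //|xs]; by exfalso; apply: Hs; exists x.
exists a; split; first by rewrite mem_head.
split => // y; rewrite in_cons => /orP[/eqP -> _|ys Py]; first lra.
by exfalso; apply: Hs; exists y.
Qed.

Lemma argmin_fin (I : finType) (P : I -> Prop) (f : I -> R) :
  (exists x, P x) -> exists x, P x /\ forall y, P y -> f x <= f y.
Proof.
move=> [x Px].
have [z [_ [Pz Hz]]] := @argmin_seq I (enum I) P f (ex_intro _ x (conj (mem_enum _ x) Px)).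
by exists z; split => // y Py; apply: Hz => //; rewrite mem_enum.
Qed.

Lemma BW1 (P : R -> R -> Prop) :
  (forall e e' x, 0 < e -> e <= e' -> P e x -> P e' x) ->
  (forall e, 0 < e -> exists x, -1 <= x <= 1 /\ P e x) ->
  exists c, forall e d, 0 < e -> 0 < d -> exists x, P e x /\ Rabs (x - c) < d.
Proof.
move=> Hmono Hne.
pose L := fun y => forall e, 0 < e -> exists x, -1 <= x <= 1 /\ P e x /\ y <= x.
have HLb : bound L.
  exists 1 => y Hy; have [x [Hx [_ Hyx]]] := Hy 1 Rlt_0_1; lra.
have HLn : exists y, L y.
  exists (-1) => e He; have [x [Hx Px]] := Hne e He; exists x; split => //; split => //; lra.
have [c [Hub Hlub]] := completeness L HLb HLn.
exists c => e d He Hd.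
have [y [Ly Hy]] : exists y, L y /\ c - d/2 < y.
  apply: NNPP => Hn; have : c <= c - d/2; last lra.
  apply: Hlub => y Ly; apply: Rnot_lt_le => Hlt; apply: Hn; exists y; split => //.
have [e0 [He0 Hb]] : exists e0, 0 < e0 /\ forall x, -1 <= x <= 1 -> P e0 x -> x < c + d/2.
  apply: NNPP => Hn.
  have : L (c + d/2); last first.
    by move=> Lc; have := Hub _ Lc; lra.
  move=> e1 He1; apply: NNPP => Hn2; apply: Hn; exists e1; split => // x Hx Px.
  apply: Rnot_le_lt => Hle; apply: Hn2; exists x; split => //.
have He' : 0 < Rmin e e0 by apply: Rmin_pos.
have [x [Hx [Px Hyx]]] := Ly _ He'.
exists x; split; first by apply: (Hmono (Rmin e e0)) => //; apply: Rmin_l.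
have := Hb x Hx (Hmono _ _ _ He' (Rmin_r e e0) Px).
move=> H1; apply: Rabs_def1; lra.
Qed.

Lemma BWn (K : finType) (W : Type) (Q : R -> W -> Prop) (co : W -> K -> R) :
  (forall e e' w, 0 < e -> e <= e' -> Q e w -> Q e' w) ->
  (forall e, 0 < e -> exists w, Q e w) ->
  (forall e w k, Q e w -> -1 <= co w k <= 1) ->
  exists c : K -> R, forall e d, 0 < e -> 0 < d ->
    exists w, Q e w /\ forall k, Rabs (co w k - c k) < d.
Proof.
move=> Hmono Hne Hbd.
suff : forall s : seq K, exists c : K -> R, forall e d, 0 < e -> 0 < d ->
    exists w, Q e w /\ forall k, k \in s -> Rabs (co w k - c k) < d.
  move=> /(_ (enum K)) [c Hc]; exists c => e d He Hd.
  have [w [Qw Hw]] := Hc e d He Hd; exists w; split => // k; apply: Hw; by rewrite mem_enum.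
elim => [|k0 s [c Hc]].
  exists (fun _ => 0) => e d He Hd; have [w Qw] := Hne e He; by exists w.
pose P := fun e x => exists w, Q e w /\ (forall k, k \in s -> Rabs (co w k - c k) < e) /\ co w k0 = x.
have [c0 Hc0] : exists c0, forall e d, 0 < e -> 0 < d -> exists x, P e x /\ Rabs (x - c0) < d.
  apply: BW1.
    move=> e e' x He Hee [w [Qw [Hw Hx]]]; exists w; split; first exact: (Hmono e).
    split => // k ks; have := Hw k ks; lra.
  move=> e He; have [w [Qw Hw]] := Hc e e He He; exists (co w k0); split; first exact: (Hbd e).
  by exists w.
exists (fun k => if k == k0 then c0 else c k) => e d He Hd.
have He' : 0 < Rmin e d by apply: Rmin_pos.
have [x [[w [Qw [Hw Hx]]] Hxc]] := Hc0 _ d He' Hd.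
exists w; split; first by apply: (Hmono (Rmin e d)) => //; apply: Rmin_l.
move=> k; rewrite in_cons; case: eqP => [-> _|_ /= ks]; first by rewrite Hx.
have := Hw k ks; have := Rmin_r e d; lra.
Qed.



Definition nzb (x : R) : bool := if Req_EM_T x 0 then false else true.
Lemma nzbP x : nzb x = true <-> x <> 0.
Proof. rewrite /nzb; case: Req_EM_T => //. Qed.
Lemma nzbF x : nzb x = false -> x = 0.
Proof. rewrite /nzb; case: Req_EM_T => //. Qed.

Definition NZ {mle meq : nat} (mu : 'I_mle.+1 -> R) (lam : 'I_meq -> R) :=
  (exists i, mu i <> 0) \/ (exists j, lam j <> 0).

Definition suppI {mle : nat} (mu : 'I_mle.+1 -> R) : {set 'I_mle.+1} := [set i | nzb (mu i)].
Definition suppJ {meq : nat} (lam : 'I_meq -> R) : {set 'I_meq} := [set j | nzb (lam j)].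

Lemma in_suppI mle (mu : 'I_mle.+1 -> R) i : i \in suppI mu <-> mu i <> 0.
Proof. by rewrite /suppI inE; apply: nzbP. Qed.
Lemma in_suppJ meq (lam : 'I_meq -> R) j : j \in suppJ lam <-> lam j <> 0.
Proof. by rewrite /suppJ inE; apply: nzbP. Qed.
Lemma notin_suppI mle (mu : 'I_mle.+1 -> R) i : i \notin suppI mu -> mu i = 0.
Proof. by rewrite /suppI inE => /negbTE /nzbF. Qed.
Lemma notin_suppJ meq (lam : 'I_meq -> R) j : j \notin suppJ lam -> lam j = 0.
Proof. by rewrite /suppJ inE => /negbTE /nzbF. Qed.

Section S.
Context {n mle meq : nat}.
Notation J := (jet n mle meq).

Lemma admits_supp (s : J) mu lam : inC s mu lam -> NZ mu lam -> admits s (suppI mu) (suppJ lam).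
Proof.
move=> HC Hnz; have [Ha [Hmu [H0 Heq]]] := HC.
split.
  move=> i /in_suppI Hi; apply: NNPP => Hn; by apply: Hi; apply: H0.
split.
  case: Hnz => [[i Hi]|[j Hj]]; [left|right]; apply/set0Pn.
    by exists i; apply/in_suppI.
  by exists j; apply/in_suppJ.
exists mu, lam; split => //; split => i; split.
- by move=> /in_suppI Hi; have := Hmu i; lra.
- exact: notin_suppI.
- by move/in_suppJ.
- exact: notin_suppJ.
Qed.

Lemma admits_mult (s : J) I J' : admits s I J' ->
  exists mu lam, inC s mu lam /\ NZ mu lam /\ suppI mu = I /\ suppJ lam = J'.
Proof.
move=> [_ [Hne [mu [lam [HC [HI HJ]]]]]].
have eI : suppI mu = I.
  apply/setP => i; apply/idP/idP => [/in_suppI Hi|Hi].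
    by apply: contraT => /(proj2 (HI i)).
  apply/in_suppI; have := proj1 (HI i) Hi; lra.
have eJ : suppJ lam = J'.
  apply/setP => j; apply/idP/idP => [/in_suppJ Hj|Hj].
    by apply: contraT => /(proj2 (HJ j)).
  by apply/in_suppJ; apply: (proj1 (HJ j)).
exists mu, lam; split => //; split => //.
case: Hne => /set0Pn [x Hx]; [left|right]; exists x.
  by apply/in_suppI; rewrite eI.
by apply/in_suppJ; rewrite eJ.
Qed.

Lemma card_lt_sub (T : finType) (A B : {set T}) : A \subset B -> A <> B -> (#|A| < #|B|)%N.
Proof.
move=> sAB nAB; rewrite ltnNge; apply/negP => Hc; apply: nAB; apply/eqP.
by rewrite eqEcard sAB Hc.
Qed.

Lemma minimal_exists (s : J) I J' : admits s I J' ->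
  exists (I0 : {set 'I_mle.+1}) (J0 : {set 'I_meq}), I0 \subset I /\ J0 \subset J' /\ inIcal s I0 J0.
Proof.
move: {2}(#|I| + #|J'|)%N (leqnn (#|I| + #|J'|)) => k.
elim: k I J' => [|k IH] I J' Hk Ha.
  exists I, J'; split => //; split => //; split => // I1 J1 s1 s2 _.
  move: Hk; rewrite leqn0 addn_eq0 => /andP[/eqP c1 /eqP c2].
  have e1 : I1 = I.
    apply/eqP; rewrite eqEcard s1 c1; by case: #|I1|.
  have e2 : J1 = J'.
    apply/eqP; rewrite eqEcard s2 c2; by case: #|J1|.
  by [].
case: (classic (inIcal s I J')) => Hm.
  by exists I, J'.
have [I1 [J1 [s1 [s2 [Ha1 Hne]]]]] : exists (I1 : {set 'I_mle.+1}) (J1 : {set 'I_meq}), I1 \subset I /\ J1 \subset J' /\ admits s I1 J1 /\ ~ (I1 = I /\ J1 = J').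
  apply: NNPP => Hn; apply: Hm; split => // I1 J1 s1 s2 Ha1.
  apply: NNPP => Hne; apply: Hn; by exists I1, J1.
have Hlt : (#|I1| + #|J1| < #|I| + #|J'|)%N.
  case: (classic (I1 = I)) => eI.
    have eJ : J1 <> J' by move=> eJ; apply: Hne.
    rewrite eI ltn_add2l; exact: card_lt_sub.
  have h1 := card_lt_sub s1 eI; have h2 := subset_leq_card s2.
  by rewrite -addSn; exact: leq_add h1 h2.
have [I0 [J0 [t1 [t2 H]]]] := IH I1 J1 (leq_trans Hlt Hk) Ha1.
exists I0, J0; split; first exact: subset_trans t1 s1.
by split => //; exact: subset_trans t2 s2.
Qed.


Lemma union_iff (s : J) : chiSP s \/ chiMF s <-> exists mu lam, inC s mu lam /\ NZ mu lam.
Proof.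
split.
  move=> [[I [J' [[Ha _] _]]]|[I [J' [[Ha _] _]]]];
    have [mu [lam [HC [Hnz _]]]] := admits_mult Ha; by exists mu, lam.
move=> [mu [lam [HC Hnz]]].
have [I0 [J0 [_ [_ Hm]]]] := minimal_exists (admits_supp HC Hnz).
case: (boolP (ord_max \in I0)) => H; [left|right]; by exists I0, J0.
Qed.

Lemma MF_iff (s : J) : chiMF s <-> exists mu lam, inC s mu lam /\ NZ mu lam /\ mu ord_max = 0.
Proof.
split.
  move=> [I [J' [[Ha _] Hn]]]; have [mu [lam [HC [Hnz [eI _]]]]] := admits_mult Ha.
  exists mu, lam; split => //; split => //; apply: notin_suppI; by rewrite eI.
move=> [mu [lam [HC [Hnz H0]]]].
have [I0 [J0 [s1 [_ Hm]]]] := minimal_exists (admits_supp HC Hnz).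
exists I0, J0; split => //; apply/negP => Hin.
have := subsetP s1 _ Hin; move/in_suppI; by [].
Qed.

Lemma inC_comb (s : J) mu lam mu2 lam2 r : inC s mu lam -> inC s mu2 lam2 ->
  (forall i, 0 <= mu i + r * mu2 i) ->
  inC s (fun i => mu i + r * mu2 i) (fun j => lam j + r * lam2 j).
Proof.
move=> [Ha [_ [H0 Heq]]] [_ [_ [H02 Heq2]]] Hp.
split => //; split => //; split.
  by move=> i Hi; rewrite H0 // H02 //; ring.
move=> k.
rewrite (eq_bigr (fun i => mu i * aext s i k + r * (mu2 i * aext s i k))); last by move=> i _; ring.
rewrite (eq_bigr (fun j => lam j * jb s j k + r * (lam2 j * jb s j k)) (P := fun _ => true) (I := 'I_meq)); last by move=> j _; ring.
rewrite !sumR_add !sumR_scal.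
have := Heq k; have := Heq2 k.
set A := \big[Rplus/0]_(i < mle.+1) (mu i * aext s i k).
set B := \big[Rplus/0]_(i < meq) (lam i * jb s i k).
set C := \big[Rplus/0]_(i < mle.+1) (mu2 i * aext s i k).
set D := \big[Rplus/0]_(i < meq) (lam2 i * jb s i k).
move=> h1 h2.
have -> : A + r * C + (B + r * D) = (A + B) + r * (C + D) by ring.
by rewrite h1 h2; ring.
Qed.

Lemma inC_scal (s : J) mu lam r : inC s mu lam -> 0 < r ->
  inC s (fun i => r * mu i) (fun j => r * lam j).
Proof.
move=> [Ha [Hmu [H0 Heq]]] Hr.
split => //; split; first by move=> i; have := Hmu i; nra.
split; first by move=> i Hi; rewrite H0 //; ring.
move=> k.
rewrite (eq_bigr (fun i => r * (mu i * aext s i k))); last by move=> i _; ring.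
rewrite (eq_bigr (fun j => r * (lam j * jb s j k)) (P := fun _ => true) (I := 'I_meq)); last by move=> j _; ring.
rewrite !sumR_scal -Rmult_plus_distr_l Heq; ring.
Qed.

Lemma supp_comb_I (mu mu2 : 'I_mle.+1 -> R) r : suppI mu2 \subset suppI mu ->
  suppI (fun i => mu i + r * mu2 i) \subset suppI mu.
Proof.
move=> sub; apply/subsetP => i /in_suppI Hi; apply/in_suppI => H0; apply: Hi.
have : i \notin suppI mu2.
  apply/negP => /(subsetP sub) /in_suppI; by [].
move/notin_suppI => ->; rewrite H0; ring.
Qed.

Lemma supp_comb_J (lam lam2 : 'I_meq -> R) r : suppJ lam2 \subset suppJ lam ->
  suppJ (fun i => lam i + r * lam2 i) \subset suppJ lam.
Proof.
move=> sub; apply/subsetP => i /in_suppJ Hi; apply/in_suppJ => H0; apply: Hi.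
have : i \notin suppJ lam2.
  apply/negP => /(subsetP sub) /in_suppJ; by [].
move/notin_suppJ => ->; rewrite H0; ring.
Qed.

Lemma reduce_fin (s : J) mu lam mu2 lam2 r : inC s mu lam -> inC s mu2 lam2 ->
  suppI mu2 \subset suppI mu -> suppJ lam2 \subset suppJ lam -> mu2 ord_max = 0 ->
  (forall i, 0 <= mu i + r * mu2 i) ->
  ((exists i, mu i <> 0 /\ mu i + r * mu2 i = 0) \/ (exists j, lam j <> 0 /\ lam j + r * lam2 j = 0)) ->
  exists mu' lam', inC s mu' lam' /\ mu' ord_max = mu ord_max /\
    (#|suppI mu'| + #|suppJ lam'| < #|suppI mu| + #|suppJ lam|)%N.
Proof.
move=> HC HC2 sI sJ Hmax Hp Hk.
exists (fun i => mu i + r * mu2 i), (fun j => lam j + r * lam2 j).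
split; first exact: inC_comb.
split; first by rewrite /= Hmax; ring.
have s1 := supp_comb_I r sI; have s2 := supp_comb_J r sJ.
set m' := (fun i => mu i + r * mu2 i) in s1 *.
set l' := (fun j => lam j + r * lam2 j) in s2 *.
case: Hk => [[i [Hi Hz]]|[j [Hj Hz]]].
  have h1 : (#|suppI m'| < #|suppI mu|)%N.
    apply: card_lt_sub => // E.
    have : i \in suppI mu by apply/in_suppI.
    rewrite -E => /in_suppI; by [].
  rewrite -addSn; apply: leq_add h1 (subset_leq_card s2).
have h2 : (#|suppJ l'| < #|suppJ lam|)%N.
  apply: card_lt_sub => // E.
  have : j \in suppJ lam by apply/in_suppJ.
  rewrite -E => /in_suppJ; by [].
rewrite -addnS; apply: leq_add (subset_leq_card s1) h2.
Qed.

Lemma reduce (s : J) mu lam mu2 lam2 : inC s mu lam -> inC s mu2 lam2 ->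
  suppI mu2 \subset suppI mu -> suppJ lam2 \subset suppJ lam -> mu2 ord_max = 0 -> NZ mu2 lam2 ->
  exists mu' lam', inC s mu' lam' /\ mu' ord_max = mu ord_max /\
    (#|suppI mu'| + #|suppJ lam'| < #|suppI mu| + #|suppJ lam|)%N.
Proof.
move=> HC HC2 sI sJ Hmax Hnz.
have Hmu := proj1 (proj2 HC); have Hmu2 := proj1 (proj2 HC2).
case: (classic (exists i, 0 < mu2 i)) => [Hpos|Hnpos].
  have [i0 [Hi0 Hmin]] := argmin_fin (fun i => mu i / mu2 i) Hpos.
  pose t := mu i0 / mu2 i0.
  apply: (reduce_fin (r := - t) HC HC2 sI sJ Hmax).
    move=> i; have := Hmu2 i; case/Rle_lt_or_eq_dec => Hi.
      have := Hmin i Hi; rewrite /t => h.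
      have : mu i0 / mu2 i0 * mu2 i <= mu i.
        have -> : mu i = mu i / mu2 i * mu2 i by field; lra.
        by apply: Rmult_le_compat_r; lra.
      lra.
    rewrite -Hi; have := Hmu i; lra.
  left; exists i0; split.
    have : i0 \in suppI mu2 by apply/in_suppI; lra.
    by move/(subsetP sI)/in_suppI.
  rewrite /t; field; lra.
have Hz : forall i, mu2 i = 0.
  move=> i; have := Hmu2 i; case/Rle_lt_or_eq_dec => // Hi.
  by exfalso; apply: Hnpos; exists i.
have [j Hj] : exists j, lam2 j <> 0.
  case: Hnz => [[i Hi]|//]; by exfalso; apply: Hi.
apply: (reduce_fin (r := - (lam j / lam2 j)) HC HC2 sI sJ Hmax).
  move=> i; rewrite Hz; have := Hmu i; lra.
right; exists j; split.
  have : j \in suppJ lam2 by apply/in_suppJ.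
  by move/(subsetP sJ)/in_suppJ.
field; lra.
Qed.

Lemma SP_crit (s : J) : (exists mu lam, inC s mu lam /\ 0 < mu ord_max) -> chiSP s.
Proof.
move=> Hex.
pose P := fun k => exists mu lam, inC s mu lam /\ 0 < mu ord_max /\ (#|suppI mu| + #|suppJ lam|)%N = k.
have [k [[mu [lam [HC [Hpos Hk]]]] Hmin]] : exists k, P k /\ forall m, P m -> (k <= m)%N.
  apply: min_ex; case: Hex => mu [lam [HC Hp]]; by exists (#|suppI mu| + #|suppJ lam|)%N, mu, lam.
have Hnz : NZ mu lam by left; exists ord_max; lra.
exists (suppI mu), (suppJ lam); split; last by apply/in_suppI; lra.
split; first exact: admits_supp.
move=> I1 J1 s1 s2 Ha1.
have [mu2 [lam2 [HC2 [Hnz2 [e1 e2]]]]] := admits_mult Ha1.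
subst I1 J1.
case: (boolP (ord_max \in suppI mu2)) => Hin.
  have Hp2 : 0 < mu2 ord_max.
    have := proj1 (proj2 HC2) ord_max; move/in_suppI: Hin; lra.
  have := Hmin _ (ex_intro _ mu2 (ex_intro _ lam2 (conj HC2 (conj Hp2 erefl)))).
  rewrite -Hk => Hle.
  have h1 := subset_leq_card s1; have h2 := subset_leq_card s2.
  have c1 : (#|suppI mu| <= #|suppI mu2|)%N.
    rewrite -(leq_add2r #|suppJ lam2|); apply: leq_trans _ Hle; by rewrite leq_add2l.
  have c2 : (#|suppJ lam| <= #|suppJ lam2|)%N.
    rewrite -(leq_add2l #|suppI mu2|); apply: leq_trans _ Hle; by rewrite leq_add2r.
  by split; apply/eqP; rewrite eqEcard ?s1 ?s2 ?c1 ?c2.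
exfalso.
have [mu' [lam' [HC' [Hmax' Hlt]]]] := reduce HC HC2 s1 s2 (notin_suppI Hin) Hnz2.
have Hp' : 0 < mu' ord_max by rewrite Hmax'.
have := Hmin _ (ex_intro _ mu' (ex_intro _ lam' (conj HC' (conj Hp' erefl)))).
by rewrite -Hk leqNgt Hlt.
Qed.

Definition co (w : ('I_mle.+1 -> R) * ('I_meq -> R)) (k : ('I_mle.+1 + 'I_meq)%type) : R :=
  match k with inl i => w.1 i | inr j => w.2 j end.

Definition PM (b : bool) (s : J) mu lam := inC s mu lam /\ NZ mu lam /\ (b -> mu ord_max = 0).

Lemma abs_between x c : Rabs x <= c -> -c <= x <= c.
Proof. move=> h; split_Rabs; lra. Qed.

Lemma normalize b (t : J) mu lam : PM b t mu lam ->
  exists mu' lam', PM b t mu' lam' /\ (forall k, -1 <= co (mu', lam') k <= 1) /\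
    exists k, Rabs (co (mu', lam') k) = 1.
Proof.
move=> [HC [Hnz Hb]].
have [ks [_ Hks]] := @argmin_fin ('I_mle.+1 + 'I_meq)%type (fun _ => True)
   (fun k => - Rabs (co (mu, lam) k)) (ex_intro _ (inl ord_max) I).
set M := Rabs (co (mu, lam) ks) in Hks.
have HM : 0 < M.
  case: Hnz => [[i Hi]|[j Hj]].
    have := Hks (inl i) I; have := Rabs_pos_lt _ Hi; rewrite /=; lra.
  have := Hks (inr j) I; have := Rabs_pos_lt _ Hj; rewrite /=; lra.
have Hr : 0 < / M by apply: Rinv_0_lt_compat.
exists (fun i => / M * mu i), (fun j => / M * lam j).
have Eco : forall k, co ((fun i => / M * mu i), (fun j => / M * lam j)) k = / M * co (mu, lam) k.
  by case.
split.
  split; first exact: inC_scal.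
  split.
    case: Hnz => [[i Hi]|[j Hj]]; [left; exists i|right; exists j] => /=;
      apply: Rmult_integral_contrapositive; split => //; lra.
  by move=> /Hb ->; ring.
split.
  move=> k; rewrite Eco; apply: abs_between.
  rewrite Rabs_mult Rabs_right; last lra.
  have := Hks k I; move=> h.
  have e1 : / M * M = 1 by apply: Rinv_l; apply: Rgt_not_eq; lra.
  apply: (Rle_trans _ (/ M * M)); first by apply: Rmult_le_compat_l; lra.
  rewrite e1; apply: Rle_refl.
exists ks; rewrite Eco Rabs_mult Rabs_right; last lra.
by rewrite Rinv_l //; apply: Rgt_not_eq; lra.
Qed.

Lemma jet_close_mono (s t : J) e e' : e <= e' -> jet_close s t e -> jet_close s t e'.
Proof.
move=> He [h1 [h2 [h3 [h4 h5]]]].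
split; first by move=> i k; have := h1 i k; lra.
split; first by move=> i; have := h2 i; lra.
split; first by move=> i k; have := h3 i k; lra.
split; first by move=> i; have := h4 i; lra.
by move=> k; have := h5 k; lra.
Qed.

Lemma aext_close (s t : J) e : jet_close s t e -> forall i k, Rabs (aext s i k - aext t i k) < e.
Proof.
move=> [h1 [_ [_ [_ h5]]]] i k; rewrite /aext; case: (unlift ord_max i) => [j|]; by [apply: h1|apply: h5].
Qed.

Lemma term_bound x y a b e A : Rabs (x - y) < e -> Rabs a <= A -> Rabs y <= 1 ->
  Rabs (a - b) < e -> Rabs (x * a - y * b) <= e * (A + 1).
Proof.
move=> h1 h2 h3 h4.
have -> : x * a - y * b = (x - y) * a + y * (a - b) by ring.
apply: Rle_trans (Rabs_triang _ _) _; rewrite !Rabs_mult.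
have : Rabs (x - y) * Rabs a <= e * A.
  apply: Rmult_le_compat => //; try apply: Rabs_pos; lra.
have : Rabs y * Rabs (a - b) <= 1 * e.
  apply: Rmult_le_compat => //; try apply: Rabs_pos; lra.
lra.
Qed.

Lemma le_addr x y : 0 <= y -> x <= x + y.
Proof. lra. Qed.
Lemma le_addl x y : 0 <= y -> x <= y + x.
Proof. lra. Qed.

Lemma Rabs_lt_split x a : Rabs x < a -> - a < x < a.
Proof. move=> h; split_Rabs; lra. Qed.

Lemma closedPM b : jclosed (fun s : J => exists mu lam, PM b s mu lam).
Proof.
move=> s Hcl.
pose W := (J * (('I_mle.+1 -> R) * ('I_meq -> R)))%type.
pose Q := fun e (w : W) => jet_close s w.1 e /\ PM b w.1 w.2.1 w.2.2 /\
   (forall k, -1 <= co w.2 k <= 1) /\ exists k, Rabs (co w.2 k) = 1.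
have Hm : forall e e' w, 0 < e -> e <= e' -> Q e w -> Q e' w.
  move=> e e' w He Hee [h1 h2]; split => //; exact: jet_close_mono h1.
have Hn : forall e, 0 < e -> exists w, Q e w.
  move=> e He; have [t [[mu [lam HP]] Hclose]] := Hcl e He.
  have [mu' [lam' [HP' [Hb Hk]]]] := normalize HP.
  by exists (t, (mu', lam')).
have Hbd : forall e w k, Q e w -> -1 <= co w.2 k <= 1.
  by move=> e w k [_ [_ [Hb _]]].
have [c Hc] := @BWn ('I_mle.+1 + 'I_meq)%type W Q (fun w => co w.2) Hm Hn Hbd.
pose mus := fun i => c (inl i); pose lams := fun j => c (inr j).
have get : forall e d, 0 < e -> 0 < d -> exists t mu lam, jet_close s t e /\ PM b t mu lam /\
    (forall i, -1 <= mu i <= 1) /\ (forall j, -1 <= lam j <= 1) /\ (exists k, Rabs (co (mu, lam) k) = 1) /\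
    (forall i, Rabs (mu i - mus i) < d) /\ (forall j, Rabs (lam j - lams j) < d).
  move=> e d He Hd; have [[t [mu lam]] [[Hcl' [HP [Hb Hk]]] Hw]] := Hc e d He Hd.
  exists t, mu, lam; split => //; split => //; split; first by move=> i; apply: (Hb (inl i)).
  split; first by move=> j; apply: (Hb (inr j)).
  split => //; split; [move=> i; apply: (Hw (inl i))|move=> j; apply: (Hw (inr j))].
have Halpha : forall i, jalpha s i <= 0.
  move=> i; apply: Rnot_lt_le => h.
  have [t [mu [lam [[_ [h2 _]] [[[Ha _] _] _]]]]] := get _ 1 h Rlt_0_1.
  have := Rabs_lt_split (h2 i); have := Ha i; lra.
exists mus, lams.
have HC : inC s mus lams.
  split; first exact: Halpha.
  split.
    move=> i; apply: Rnot_lt_le => h.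
    have [t [mu [lam [_ [[[_ [Hmu _]] _] [_ [_ [_ [Hw _]]]]]]]]] := get 1 (- mus i) Rlt_0_1 ltac:(lra).
    have := Rabs_lt_split (Hw i); have := Hmu i; lra.
  split.
    move=> i Hni; apply: small_eq0 => d Hd.
    move: Hni; rewrite /in_I0star; case E: (unlift ord_max i) => [j|] Hni; last by exfalso; apply: Hni.
    have hj : jalpha s j < 0 by have := Halpha j; case/Rle_lt_or_eq_dec => // h; exfalso.
    have [t [mu [lam [[_ [h2 _]] [[[_ [_ [H0 _]]] _] [_ [_ [_ [Hw _]]]]]]]]] := get (- jalpha s j) d ltac:(lra) Hd.
    have Hz : mu i = 0.
      apply: H0; rewrite /in_I0star E => h; have := Rabs_lt_split (h2 j); lra.
    by have := Hw i; rewrite Hz Rminus_0_l Rabs_Ropp.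
  move=> k; apply: small_eq0 => g Hg.
  pose A := \big[Rplus/0]_(i < mle.+1) Rabs (aext s i k) + \big[Rplus/0]_(j < meq) Rabs (jb s j k).
  pose N1 := \big[Rplus/0]_(i < mle.+1) (1 : R).
  pose N2 := \big[Rplus/0]_(j < meq) (1 : R).
  have hA1 : forall i, Rabs (aext s i k) <= A.
    move=> i; apply: Rle_trans; first by apply: (sumR_term (F := fun i => Rabs (aext s i k))) => i0; apply: Rabs_pos.
    by apply: le_addr; apply: sumR_ge0 => j; apply: Rabs_pos.
  have hA2 : forall j, Rabs (jb s j k) <= A.
    move=> j; apply: Rle_trans; first by apply: (sumR_term (F := fun j => Rabs (jb s j k))) => i0; apply: Rabs_pos.
    by apply: le_addl; apply: sumR_ge0 => i; apply: Rabs_pos.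
  have hA : 0 <= A.
    apply: Rplus_le_le_0_compat; apply: sumR_ge0 => i; apply: Rabs_pos.
  have hN : 0 <= N1 + N2.
    apply: Rplus_le_le_0_compat; apply: sumR_ge0 => i; apply: Rle_0_1.
  pose e := g / ((A + 1) * (N1 + N2 + 1)).
  have He : 0 < e by apply: Rdiv_lt_0_compat => //; apply: Rmult_lt_0_compat; lra.
  have [t [mu [lam [Hclose [[[_ [_ [_ Heq]]] _] [Hb [Hb2 [_ [Hw1 Hw2]]]]]]]]] := get e e He He.
  have E1 : \big[Rplus/0]_(i < mle.+1) (mus i * aext s i k) =
    \big[Rplus/0]_(i < mle.+1) (mus i * aext s i k - mu i * aext t i k) +
    \big[Rplus/0]_(i < mle.+1) (mu i * aext t i k).
    by rewrite -sumR_add; apply: eq_bigr => i _; ring.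
  have E2 : \big[Rplus/0]_(j < meq) (lams j * jb s j k) =
    \big[Rplus/0]_(j < meq) (lams j * jb s j k - lam j * jb t j k) +
    \big[Rplus/0]_(j < meq) (lam j * jb t j k).
    by rewrite -sumR_add; apply: eq_bigr => i _; ring.
  have B1 : Rabs (\big[Rplus/0]_(i < mle.+1) (mus i * aext s i k - mu i * aext t i k)) <= e * (A + 1) * N1.
    apply: sumR_abs_le => i; apply: term_bound => //.
    - by rewrite Rabs_minus_sym; apply: Hw1.
    - by apply: Rabs_le; have := Hb i; lra.
    - exact: aext_close.
  have B2 : Rabs (\big[Rplus/0]_(j < meq) (lams j * jb s j k - lam j * jb t j k)) <= e * (A + 1) * N2.
    apply: sumR_abs_le => j; apply: term_bound => //.
    - by rewrite Rabs_minus_sym; apply: Hw2.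
    - by apply: Rabs_le; have := Hb2 j; lra.
    - by have [_ [_ [h3 _]]] := Hclose; apply: h3.
  rewrite E1 E2.
  set D1 := \big[Rplus/0]_(i < mle.+1) (mus i * aext s i k - mu i * aext t i k) in B1 *.
  set D2 := \big[Rplus/0]_(j < meq) (lams j * jb s j k - lam j * jb t j k) in B2 *.
  have -> : D1 + \big[Rplus/0]_(i < mle.+1) (mu i * aext t i k) + (D2 + \big[Rplus/0]_(j < meq) (lam j * jb t j k))
     = D1 + D2 + (\big[Rplus/0]_(i < mle.+1) (mu i * aext t i k) + \big[Rplus/0]_(j < meq) (lam j * jb t j k)) by ring.
  rewrite Heq Rplus_0_r.
  have Hee : e * ((A + 1) * (N1 + N2 + 1)) = g by rewrite /e; field; split; lra.
  have h1 : e * (A + 1) * N1 + e * (A + 1) * N2 + e * (A + 1) = g by rewrite -Hee; ring.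
  have h2 : 0 < e * (A + 1) by apply: Rmult_lt_0_compat; lra.
  have := Rabs_triang D1 D2; lra.
split => //.
split.
  have [t [mu [lam [_ [_ [_ [_ [[kk Hk] [Hw1 Hw2]]]]]]]]] := get 1 (1/2) Rlt_0_1 ltac:(lra).
  case: kk Hk => [i|j] /= Hk; [left; exists i|right; exists j] => Hz.
    by have := Hw1 i; rewrite Hz Rminus_0_r; lra.
  by have := Hw2 j; rewrite Hz Rminus_0_r; lra.
move=> Hbt; apply: small_eq0 => d Hd.
have [t [mu [lam [_ [[_ [_ Hmx]] [_ [_ [_ [Hw1 _]]]]]]]]] := get 1 d Rlt_0_1 Hd.
by have := Hw1 ord_max; rewrite (Hmx Hbt) Rminus_0_l Rabs_Ropp.
Qed.

Lemma jclosure_mono (S T : J -> Prop) : (forall s, S s -> T s) -> forall s, jclosure S s -> jclosure T s.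
Proof. move=> ST s H e He; have [t [St Ht]] := H e He; exists t; split => //; exact: ST. Qed.

Lemma jclosure_self (S : J -> Prop) s : S s -> jclosure S s.
Proof.
move=> Ss e He; exists s; split => //.
by split; [|split; [|split; [|split]]] => *; rewrite Rminus_diag Rabs_R0.
Qed.

Lemma MF_closed : jclosed (@chiMF n mle meq).
Proof.
move=> s Hs; apply/MF_iff.
have : exists mu lam, PM true s mu lam.
  apply: closedPM; apply: jclosure_mono Hs => t /MF_iff [mu [lam [HC [Hnz H0]]]].
  by exists mu, lam; split => //; split.
by move=> [mu [lam [HC [Hnz H0]]]]; exists mu, lam; split => //; split => //; apply: H0.
Qed.

Lemma union_closed : jclosed (fun s : J => chiSP s \/ chiMF s).
Proof.
move=> s Hs; apply/union_iff.
have : exists mu lam, PM false s mu lam.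
  apply: closedPM; apply: jclosure_mono Hs => t /union_iff [mu [lam [HC Hnz]]].
  by exists mu, lam; split => //; split.
by move=> [mu [lam [HC [Hnz H0]]]]; exists mu, lam.
Qed.

Lemma MF_closure (s : J) : chiMF s -> jclosure (@chiSP n mle meq) s.
Proof.
move=> /MF_iff [mu [lam [HC [Hnz H0]]]] eps Heps.
have [Ha [Hmu [Hi0 Heq]]] := HC.
pose S := \big[Rplus/0]_(i < mle.+1) mu i + \big[Rplus/0]_(j < meq) (lam j * lam j).
have HS : 0 < S.
  have g1 : 0 <= \big[Rplus/0]_(i < mle.+1) mu i by apply: sumR_ge0.
  have g2 : 0 <= \big[Rplus/0]_(j < meq) (lam j * lam j) by apply: sumR_ge0 => j; apply: Rle_0_sqr.
  case: Hnz => [[i Hi]|[j Hj]].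
    have : mu i <= \big[Rplus/0]_(i < mle.+1) mu i by apply: sumR_term.
    have := Hmu i; rewrite /S; lra.
  have : lam j * lam j <= \big[Rplus/0]_(j < meq) (lam j * lam j) by apply: (sumR_term (F := fun j => lam j * lam j)) => j0; apply: Rle_0_sqr.
  have := Rsqr_pos_lt _ Hj; rewrite /Rsqr /S; lra.
pose A := \big[Rplus/0]_(k < n) Rabs (jastar s k) + 1.
have hA : forall k, Rabs (jastar s k) <= A.
  move=> k; rewrite /A; apply: Rle_trans (_ : _ <= \big[Rplus/0]_(k < n) Rabs (jastar s k)) _.
    by apply: (sumR_term (F := fun k => Rabs (jastar s k))) => k0; apply: Rabs_pos.
  lra.
have hA0 : 1 <= A by rewrite /A; apply: le_addl; apply: sumR_ge0 => k; apply: Rabs_pos.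
pose L := \big[Rplus/0]_(j < meq) Rabs (lam j) + 1.
have hL : forall j, Rabs (lam j) <= L.
  move=> j; rewrite /L; apply: Rle_trans (_ : _ <= \big[Rplus/0]_(j < meq) Rabs (lam j)) _.
    by apply: (sumR_term (F := fun j => Rabs (lam j))) => j0; apply: Rabs_pos.
  lra.
have hL0 : 1 <= L by rewrite /L; apply: le_addl; apply: sumR_ge0 => k; apply: Rabs_pos.
pose c := eps / (2 * (A * L)).
have hc : 0 < c by apply: Rdiv_lt_0_compat => //; nra.
have hcAL : c * (A * L) = eps / 2 by rewrite /c; field; split; lra.
pose t := Jet (fun i k => ja s i k - c * jastar s k) (jalpha s)
              (fun j k => jb s j k - c * lam j * jastar s k) (jbeta s) (jastar s).
exists t; split.
  apply: SP_crit.
  exists (fun i => if i == ord_max then c * S else mu i), lam; split; last first.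
    by rewrite eqxx; apply: Rmult_lt_0_compat.
  split; first exact: Ha.
  split.
    move=> i; case: eqP => _; [apply: Rlt_le; exact: Rmult_lt_0_compat|exact: Hmu].
  split.
    move=> i Hni; case: eqP => Ei.
      by exfalso; apply: Hni; rewrite Ei /in_I0star unlift_none.
    by apply: Hi0.
  move=> k.
  rewrite (eq_bigr (fun i => mu i * aext s i k + (- (c * jastar s k)) * mu i +
             (if i == ord_max then c * S * jastar s k else 0))); last first.
    move=> i _; rewrite /aext; case: unliftP => [j ->|->] /=.
      rewrite eq_sym (negbTE (neq_lift _ _)); ring.
    rewrite eqxx H0; ring.
  rewrite (eq_bigr (fun j => lam j * jb s j k + (- (c * jastar s k)) * (lam j * lam j)) (P := fun _ => true) (I := 'I_meq)); last first.
    by move=> j _ /=; ring.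
  rewrite !sumR_add !sumR_scal sumR_delta.
  have := Heq k; rewrite /S.
  set X1 := \big[Rplus/0]_(i < mle.+1) (mu i * aext s i k).
  set X2 := \big[Rplus/0]_(i < meq) (lam i * jb s i k).
  set Y1 := \big[Rplus/0]_(i < mle.+1) mu i.
  set Y2 := \big[Rplus/0]_(i < meq) (lam i * lam i).
  move=> h.
  have -> : X1 + - (c * jastar s k) * Y1 + c * (Y1 + Y2) * jastar s k + (X2 + - (c * jastar s k) * Y2)
     = X1 + X2 by ring.
  exact: h.
split.
  move=> i k /=.
  have -> : ja s i k - (ja s i k - c * jastar s k) = c * jastar s k by ring.
  rewrite Rabs_mult Rabs_right; last lra.
  have : c * Rabs (jastar s k) <= c * A by apply: Rmult_le_compat_l; [lra|apply: hA].
  have : c * A <= c * (A * L) by apply: Rmult_le_compat_l; nra.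
  lra.
split; first by move=> i /=; rewrite Rminus_diag Rabs_R0.
split.
  move=> j k /=.
  have -> : jb s j k - (jb s j k - c * lam j * jastar s k) = c * (lam j * jastar s k) by ring.
  rewrite Rabs_mult Rabs_mult Rabs_right; last lra.
  have hh : Rabs (lam j) * Rabs (jastar s k) <= L * A.
    apply: Rmult_le_compat; try apply: Rabs_pos; [apply: hL|apply: hA].
  have hh2 : c * (Rabs (lam j) * Rabs (jastar s k)) <= c * (L * A) by apply: Rmult_le_compat_l; lra.
  have e3 : c * (L * A) = c * (A * L) by ring.
  lra.
split; first by move=> j /=; rewrite Rminus_diag Rabs_R0.
by move=> k /=; rewrite Rminus_diag Rabs_R0.
Qed.

End S.

Theorem mainTheorem7 (n mle meq : nat) :
  jclosed (@chiMF n mle meq) /\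
  jclosed (fun sigma : jet n mle meq => chiSP sigma \/ chiMF sigma) /\
  (forall sigma, @chiMF n mle meq sigma -> jclosure (@chiSP n mle meq) sigma) /\
  (forall sigma, jclosure (@chiSP n mle meq) sigma <-> chiSP sigma \/ chiMF sigma).
Proof.
split; first exact: MF_closed.
split; first exact: union_closed.
split; first by move=> s; apply: MF_closure.
move=> s; split.
  move=> H; apply: union_closed; apply: jclosure_mono H => t Ht; by left.
by case=> [H|H]; [apply: jclosure_self|apply: MF_closure].
Qed.
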